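(* Let $\alpha\in\mathbb{Q}(i)\setminus\mathbb{R}$ with $|\alpha|>1$, with minimal primitive polynomial $P_\alpha(X)=a_2X^2+a_1X+a_0$ ($a_0,a_1,a_2\in\mathbb{Z}$ coprime, $a_2>0$, $P_\alpha(\alpha)=0$), and $\mathcal{D}=\{0,\ldots,|a_0|-1\}$. Write $\alpha=\frac{num(\alpha)}{den(\alpha)}$ with $num(\alpha),den(\alpha)\in\mathbb{Z}[i]$ having no common Gaussian prime divisor. Let $x\in\mathbb{C}$, $k\in\mathbb{Z}$, and $(d_j)_{j\le k}$ a sequence in $\mathcal{D}$ with $d_k\ne0$ such that $x=\sum_{j\le k}d_j\alpha^j$ in $\mathbb{C}$. Then this series is an $\alpha$-expansion of $x$ if and only if it converges to $0$ in $K_p$ for every Gaussian prime $p$ dividing $den(\alpha)$.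
   Context: Let $\Lambda_\alpha=\mathbb{Z}[\alpha]\cap\alpha^{-1}\mathbb{Z}[\alpha^{-1}]$. An $\alpha$-expansion of $x$ is a representation $x=\sum_{j\le k}d_j\alpha^j$ with $d_j\in\mathcal{D}$, $d_k\ne0$, such that for every $l\le k$, $\sum_{j=l}^k d_j\alpha^{j-l}\in\Lambda_\alpha$. For a Gaussian prime $p$, $\nu_p:\mathbb{Q}(i)\to\mathbb{Z}\cup\{\infty\}$ is the exponent of $p$ in the (unique up to units and associates) factorization of a nonzero element into Gaussian primes, $\nu_p(0)=\infty$; the $p$-adic absolute value is $|x|_p=N(p)^{-\nu_p(x)}$ with $N(p)$ the norm of $p$, and $K_p$ is the completion of $\mathbb{Q}(i)$ with respect to $|\cdot|_p$. *)

(* Defs.v *)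
From HB Require Import structures.
From mathcomp Require Import all_boot all_order all_algebra.
From mathcomp Require Export complex.
From mathcomp Require Export reals.
Set Implicit Arguments. Unset Strict Implicit. Unset Printing Implicit Defensive.
Import Order.TTheory GRing.Theory Num.Theory.
Local Open Scope ring_scope.

Section Defs.
Variable R : realType.
Local Notation C := (R[i]).

Definition iC : C := Complex 0 1.

Definition in_Qi (z : C) : Prop :=
  exists a b : rat, z = ratr a + ratr b * iC.

Definition gint (z : C) : Prop :=
  exists a b : int, z = a%:~R + b%:~R * iC.

Definition gdvd (p z : C) : Prop := exists w, gint w /\ z = p * w.

Definition gprime (p : C) : Prop :=
  [/\ gint p, p != 0, ~ (exists w, gint w /\ p * w = 1) &
      forall a b, gint a -> gint b -> gdvd p (a * b) -> gdvd p a \/ gdvd p b].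

(* nu_p(z) >= M  (for z in Q(i); z = 0 included):
   z = p^M * u / v with u, v Gaussian integers and p not dividing v.
   Equivalently |z|_p <= N(p)^(-M). *)
Definition pval_ge (p z : C) (M : nat) : Prop :=
  exists u v, [/\ gint u, gint v, ~ gdvd p v & z * v = p ^+ M * u].

Definition in_Zpoly (a z : C) : Prop :=
  exists q : {poly int}, z = (map_poly intr q).[a].
Definition in_Lambda (a z : C) : Prop :=
  in_Zpoly a z /\ exists q : {poly int}, z = a^-1 * (map_poly intr q).[a^-1].

(* partial sum  S_(k-m) = sum_(j = k-m)^k d_j a^j  (m : nat, so l = k - m ranges
   over all integers l <= k) *)
Definition psum (a : C) (k : int) (d : int -> nat) (m : nat) : C :=
  \sum_(i < m.+1) (d (k - i%:Z))%:R * a ^ (k - i%:Z).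

(* normalized tail sum  sum_(j = l)^k d_j a^(j-l)  with l = k - m *)
Definition ntail (a : C) (k : int) (d : int -> nat) (m : nat) : C :=
  \sum_(i < m.+1) (d (k - i%:Z))%:R * a ^+ (m - i).

Definition series_to (a : C) (k : int) (d : int -> nat) (x : C) : Prop :=
  forall e : R, 0 < e -> exists N : nat, forall m : nat, (N <= m)%N ->
    `|x - psum a k d m| < Complex e 0.

(* the series sum_(j <= k) d_j a^j converges to 0 in K_p, i.e. its partial sums
   (elements of Q(i)) tend to 0 for |.|_p, i.e. nu_p(partial sums) -> +oo *)
Definition padic_to0 (p a : C) (k : int) (d : int -> nat) : Prop :=
  forall M : nat, exists N : nat, forall m : nat, (N <= m)%N ->
    pval_ge p (psum a k d m) M.

Definition alpha_expansion (a : C) (nD : nat) (k : int) (d : int -> nat)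
    (x : C) : Prop :=
  [/\ series_to a k d x,
      (forall j : int, j <= k -> (d j < nD)%N),
      d k != 0%N &
      forall m : nat, in_Lambda a (ntail a k d m)].

End Defs.

(* Main.v *)
Require Import Defs.
From HB Require Import structures.
From mathcomp Require Import all_boot all_order all_algebra.
From mathcomp Require Import complex reals.
From mathcomp Require Import zify ring lra.
From Stdlib Require Import Classical.
Set Implicit Arguments. Unset Strict Implicit. Unset Printing Implicit Defensive.
Import Order.TTheory GRing.Theory Num.Theory.
Local Open Scope ring_scope.


Lemma roundz (X N : int) : 0 < N -> exists q r : int, X = q * N + r /\ -N <= 2 * r <= N.
Proof.
move=> hN.
have h1 := divz_eq X N. have h2 : 0 <= (X %% N)%Z by rewrite modz_ge0 // gt_eqF.
have h3 : (X %% N < N)%Z by move: (ltz_pmod X hN).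
set q := (X %/ N)%Z in h1 *; set r := (X %% N)%Z in h1 h2 h3 *.
case: (leP (2 * r) N) => hr.
  by exists q, r; split => //; lia.
by exists (q + 1), (r - N); split; lia.
Qed.

Lemma sq_bound (r N : int) : -N <= 2 * r <= N -> 4 * r ^+ 2 <= N ^+ 2.
Proof. move=> /andP[h1 h2]; nia. Qed.

Section G.
Variable R : realType.
Local Notation C := (R[i]).
Local Notation cRe := complex.Re.
Local Notation cIm := complex.Im.
Local Notation cj := (@conjc R).
Implicit Types (z w : C).

Lemma intrC (a : int) : (a%:~R : C) = Complex (a%:~R) 0.
Proof. by rewrite -(rmorph_int (real_complex R)). Qed.

Definition gi (a b : int) : C := Complex a%:~R b%:~R.

Lemma ReD (x y : C) : cRe (x + y) = cRe x + cRe y. Proof. by case: x => a b; case: y => c e; reflexivity. Qed.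
Lemma ImD (x y : C) : cIm (x + y) = cIm x + cIm y. Proof. by case: x => a b; case: y => c e; reflexivity. Qed.
Lemma ReM (x y : C) : cRe (x * y) = cRe x * cRe y - cIm x * cIm y. Proof. by case: x => a b; case: y => c e; reflexivity. Qed.
Lemma ImM (x y : C) : cIm (x * y) = cRe x * cIm y + cIm x * cRe y. Proof. by case: x => a b; case: y => c d; reflexivity. Qed.

Lemma cjM z w : cj (z * w) = cj z * cj w.
Proof. case: z => a b; case: w => c d; apply/eqP; rewrite eq_complex /=; apply/andP; split; apply/eqP; ring. Qed.
Lemma cjD z w : cj (z + w) = cj z + cj w.
Proof. case: z => a b; case: w => c d; apply/eqP; rewrite eq_complex /=; apply/andP; split; apply/eqP; ring. Qed.
Lemma cjN z : cj (- z) = - cj z.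
Proof. case: z => a b; apply/eqP; rewrite eq_complex /=; apply/andP; split; apply/eqP; ring. Qed.
Lemma cjK z : cj (cj z) = z.
Proof. by case: z => a b /=; rewrite opprK. Qed.
Lemma cj1 : cj 1 = 1.
Proof. by apply/eqP; rewrite eq_complex /= oppr0 !eqxx. Qed.
Lemma cjX z n : cj (z ^+ n) = cj z ^+ n.
Proof. by elim: n => [|n IH]; rewrite ?expr0 ?cj1 // !exprS cjM IH. Qed.

Lemma giE a b : (a%:~R + b%:~R * iC R : C) = gi a b.
Proof.
apply/eqP; rewrite eq_complex ReD ImD ReM ImM !intrC /= /iC /=.
by rewrite !mulr0 !mul0r !mulr1 !subr0 !addr0 !add0r !eqxx.
Qed.

Lemma gintP z : gint z <-> exists a b, z = gi a b.
Proof. by split=> -[a [b ->]]; exists a, b; rewrite giE. Qed.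

Lemma gi_add a b c d : gi a b + gi c d = gi (a + c) (b + d).
Proof. by apply/eqP; rewrite eq_complex ReD ImD /= !rmorphD !eqxx. Qed.

Lemma gi_opp a b : - gi a b = gi (- a) (- b).
Proof. by apply/eqP; rewrite eq_complex /= !rmorphN !eqxx. Qed.

Lemma gi_mul a b c d : gi a b * gi c d = gi (a * c - b * d) (a * d + b * c).
Proof. by apply/eqP; rewrite eq_complex ReM ImM /= !rmorphD !rmorphN !rmorphM !eqxx. Qed.

Lemma gi_conj a b : cj (gi a b) = gi a (- b).
Proof. by apply/eqP; rewrite eq_complex /= !rmorphN !eqxx. Qed.

Lemma gi_int a : (a%:~R : C) = gi a 0.
Proof. by rewrite intrC /gi. Qed.

Lemma gi1 : (1 : C) = gi 1 0.
Proof. by apply/eqP; rewrite eq_complex /= ?eqxx. Qed.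
Lemma gi0 : (0 : C) = gi 0 0.
Proof. by apply/eqP; rewrite eq_complex /= ?eqxx. Qed.

Lemma gi_inj a b c d : gi a b = gi c d -> a = c /\ b = d.
Proof. by case=> /intr_inj -> /intr_inj ->. Qed.

Lemma gint_gi a b : gint (gi a b). Proof. by apply/gintP; exists a, b. Qed.

Lemma gint_int (a : int) : gint (a%:~R : C). Proof. by rewrite gi_int; apply: gint_gi. Qed.
Lemma gi_nat (n : nat) : (n%:R : C) = gi n 0. Proof. exact: (gi_int n). Qed.
Lemma gint_nat (n : nat) : gint (n%:R : C). Proof. exact: (gint_int n). Qed.
Lemma gint0 : gint (0 : C). Proof. exact: (gint_nat 0). Qed.
Lemma gint1 : gint (1 : C). Proof. exact: (gint_nat 1). Qed.
Lemma gintD z w : gint z -> gint w -> gint (z + w).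
Proof. by move=> /gintP[a [b ->]] /gintP[c [d ->]]; rewrite gi_add; apply: gint_gi. Qed.
Lemma gintN z : gint z -> gint (- z).
Proof. by move=> /gintP[a [b ->]]; rewrite gi_opp; apply: gint_gi. Qed.
Lemma gintB z w : gint z -> gint w -> gint (z - w).
Proof. by move=> hz hw; apply: gintD => //; apply: gintN. Qed.
Lemma gintM z w : gint z -> gint w -> gint (z * w).
Proof. by move=> /gintP[a [b ->]] /gintP[c [d ->]]; rewrite gi_mul; apply: gint_gi. Qed.
Lemma gintX z n : gint z -> gint (z ^+ n).
Proof. by move=> hz; elim: n => [|n IH]; [rewrite expr0; apply: gint1 | rewrite exprS; apply: gintM]. Qed.
Lemma gintJ z : gint z -> gint (cj z).
Proof. by move=> /gintP[a [b ->]]; rewrite gi_conj; apply: gint_gi. Qed.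
Lemma gintiC : gint (iC R). Proof. by exists 0, 1; rewrite mul1r add0r. Qed.

Definition gn (z : C) : nat :=
  absz (Num.floor (cRe z) ^+ 2 + Num.floor (cIm z) ^+ 2).

Lemma gn_gi a b : gn (gi a b) = absz (a ^+ 2 + b ^+ 2).
Proof. by rewrite /gn /= !intrKfloor. Qed.

Lemma gnE z : gint z -> ((gn z)%:R : C) = z * cj z.
Proof.
move=> /gintP[a [b ->]]; rewrite gn_gi gi_conj gi_mul.
have -> : a * a - b * - b = (absz (a ^+ 2 + b ^+ 2))%:Z.
  by rewrite gez0_abs ?addr_ge0 ?sqr_ge0 // mulrN opprK !expr2.
by rewrite gi_nat; congr gi; lia.
Qed.

Lemma gnM z w : gint z -> gint w -> gn (z * w) = (gn z * gn w)%N.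
Proof.
move=> hz hw; apply/eqP; rewrite -(eqr_nat C) natrM (gnE (gintM hz hw)) (gnE hz) (gnE hw) cjM.
by apply/eqP; ring.
Qed.

Lemma gn_eq0 z : gint z -> (gn z == 0%N) = (z == 0).
Proof.
move=> /gintP[a [b ->]]; rewrite gn_gi.
apply/idP/idP => [/eqP h|/eqP h].
  have [-> ->] : a = 0 /\ b = 0 by lia.
  by [].
have [-> ->] := gi_inj (etrans h (gi_int 0)).
by [].
Qed.

Lemma gn_gt0 z : gint z -> z != 0 -> (0 < gn z)%N.
Proof. by move=> hz hz0; rewrite lt0n gn_eq0. Qed.

Definition gunit (z : C) := exists w, gint w /\ z * w = 1.

Lemma gn1_unit z : gint z -> gn z = 1%N -> gunit z.
Proof. by move=> hz h; exists (cj z); split; [apply: gintJ|rewrite -gnE // h]. Qed.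

Lemma gunit_gn1 z : gint z -> gunit z -> gn z = 1%N.
Proof.
move=> hz [w [hw hzw]]; have := gnM hz hw; rewrite hzw.
have -> : gn 1 = 1%N by rewrite gi1 gn_gi.
by move/esym/eqP; rewrite muln_eq1 => /andP[/eqP].
Qed.

Lemma geuclid a b : gint a -> gint b -> b != 0 ->
  exists q r, [/\ gint q, gint r, a = b * q + r & (gn r < gn b)%N].
Proof.
move=> /gintP[x [y ->]] /gintP[c [e ->]] hb0.
have hN : 0 < c ^+ 2 + e ^+ 2.
  have := gn_gt0 (gint_gi c e) hb0; rewrite gn_gi; lia.
have [q1 [r1 [h1 h1']]] := roundz (x * c + y * e) hN.
have [q2 [r2 [h2 h2']]] := roundz (y * c - x * e) hN.
exists (gi q1 q2), (gi x y - gi c e * gi q1 q2).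
split; [exact: gint_gi | by apply: gintB; [apply: gint_gi | apply: gintM; apply: gint_gi] | by rewrite addrC subrK |].
rewrite gi_mul gi_opp gi_add !gn_gi.
set s := x + - (c * q1 - e * q2); set t := y + - (c * q2 + e * q1).
have key : (s ^+ 2 + t ^+ 2) * (c ^+ 2 + e ^+ 2) = r1 ^+ 2 + r2 ^+ 2.
  rewrite /s /t; have -> : r1 = x * c + y * e - q1 * (c ^+ 2 + e ^+ 2) by lia.
  have -> : r2 = y * c - x * e - q2 * (c ^+ 2 + e ^+ 2) by lia.
  ring.
have e1 := sq_bound h1'.
have e2 := sq_bound h2'.
have e3 : (4 * (s ^+ 2 + t ^+ 2)) * (c ^+ 2 + e ^+ 2) <= (2 * (c ^+ 2 + e ^+ 2)) * (c ^+ 2 + e ^+ 2).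
  rewrite -mulrA key; lia.
rewrite ler_pM2r // in e3.
have e4 : 0 <= s ^+ 2 + t ^+ 2 by rewrite addr_ge0 ?sqr_ge0.
lia.
Qed.
End G.


Section G2.
Variable R : realType.
Local Notation C := (R[i]).
Local Notation cj := (@conjc R).
Implicit Types (z w p q a b c d u v : C).

Lemma gdvd_refl a : gdvd a a. Proof. by exists 1; rewrite mulr1; split; [apply: gint1|]. Qed.
Lemma gdvd0 a : gdvd a 0. Proof. by exists 0; rewrite mulr0; split; [apply: gint0|]. Qed.
Lemma gdvd1 z : gint z -> gdvd 1 z. Proof. by move=> hz; exists z; rewrite mul1r. Qed.
Lemma gdvd_mulr a b c : gdvd a b -> gint c -> gdvd a (b * c).
Proof. by move=> [w [hw ->]] hc; exists (w * c); rewrite mulrA; split => //; apply: gintM. Qed.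
Lemma gdvd_mull a b c : gdvd a b -> gint c -> gdvd a (c * b).
Proof. by move=> h hc; rewrite mulrC; apply: gdvd_mulr. Qed.
Lemma gdvd_trans a b c : gdvd a b -> gdvd b c -> gdvd a c.
Proof. by move=> [w [hw ->]] [v [hv ->]]; exists (w * v); rewrite mulrA; split => //; apply: gintM. Qed.
Lemma gdvdD a b c : gdvd a b -> gdvd a c -> gdvd a (b + c).
Proof. by move=> [w [hw ->]] [v [hv ->]]; exists (w + v); rewrite mulrDr; split => //; apply: gintD. Qed.
Lemma gdvdN a b : gdvd a b -> gdvd a (- b).
Proof. by move=> [w [hw ->]]; exists (- w); rewrite mulrN; split => //; apply: gintN. Qed.
Lemma gdvdB a b c : gdvd a b -> gdvd a c -> gdvd a (b - c).
Proof. by move=> h1 h2; apply: gdvdD => //; apply: gdvdN. Qed.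
Lemma gdvd_mul a b c d : gdvd a b -> gdvd c d -> gdvd (a * c) (b * d).
Proof.
move=> [w [hw ->]] [v [hv ->]]; exists (w * v); split; first by apply: gintM.
by rewrite mulrACA.
Qed.
Lemma gdvd_mulxl a b : gint b -> gdvd a (a * b). Proof. by move=> hb; exists b. Qed.
Lemma gdvd_mulxr a b : gint b -> gdvd a (b * a). Proof. by move=> hb; exists b; rewrite mulrC. Qed.
Lemma gdvd_exp a b k : gdvd a b -> gdvd (a ^+ k) (b ^+ k).
Proof.
move=> h; elim: k => [|k IH]; first by rewrite !expr0; apply: gdvd_refl.
by rewrite !exprS; apply: gdvd_mul.
Qed.
Lemma gdvd_expl a k j : gint a -> (k <= j)%N -> gdvd (a ^+ k) (a ^+ j).
Proof.
move=> ha hkj; exists (a ^+ (j - k)); split; first by apply: gintX.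
by rewrite -exprD subnKC.
Qed.
Lemma gdvd_gint a b : gint a -> gdvd a b -> gint b.
Proof. by move=> ha [w [hw ->]]; apply: gintM. Qed.
Lemma gdvd_cancel p a b : p != 0 -> gdvd (p * a) (p * b) -> gdvd a b.
Proof.
move=> hp [w [hw e]]; exists w; split => //.
by apply: (mulfI hp); rewrite e mulrA.
Qed.
Lemma gdvd_cj a b : gdvd a b -> gdvd (cj a) (cj b).
Proof. by move=> [w [hw ->]]; exists (cj w); rewrite cjM; split => //; apply: gintJ. Qed.
Lemma gdvd_unit u z : gunit u -> gint z -> gdvd u z.
Proof. by move=> [w [hw e]] hz; exists (w * z); rewrite mulrA e mul1r; split => //; apply: gintM. Qed.

Lemma gn_dvd a b : gint a -> gint b -> b != 0 -> gdvd a b -> (gn a <= gn b)%N.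
Proof.
move=> ha hb hb0 [w [hw e]]; rewrite e gnM //.
have hw0 : w != 0 by apply: contraNneq hb0 => h; rewrite e h mulr0.
by rewrite leq_pmulr // gn_gt0.
Qed.

Lemma gn_dvdn a b : gint a -> gint b -> gdvd a b -> (gn a %| gn b)%N.
Proof. by move=> ha hb [w [hw ->]]; rewrite gnM // dvdn_mulr. Qed.

Lemma gprime_gint p : gprime p -> gint p. Proof. by case. Qed.
Lemma gprime_neq0 p : gprime p -> p != 0. Proof. by case. Qed.
Lemma gprime_nunit p : gprime p -> ~ gunit p. Proof. by case. Qed.
Lemma gprime_dvdM p a b : gprime p -> gint a -> gint b -> gdvd p (a * b) -> gdvd p a \/ gdvd p b.
Proof. by case=> _ _ _; apply. Qed.

Lemma gprime_gn p : gprime p -> (2 <= gn p)%N.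
Proof.
move=> hp; have hg := gprime_gint hp.
have := gn_gt0 hg (gprime_neq0 hp).
case: (gn p =P 1%N) => [/(gn1_unit hg) /(gprime_nunit hp) //|].
by case: (gn p) => [|[|n]].
Qed.

Lemma gunit_gint u : gunit u -> gint u -> gint (u^-1).
Proof.
move=> [w [hw e]] hu.
have hu0 : u != 0 by apply: contra_eq_neq e => ->; rewrite mul0r eq_sym oner_neq0.
have -> : u^-1 = w by apply: (mulfI hu0); rewrite mulfV.
by [].
Qed.

Lemma gunitM u v : gunit u -> gunit v -> gunit (u * v).
Proof. by move=> [a [ha ea]] [b [hb eb]]; exists (a * b); split; [apply: gintM | rewrite mulrACA ea eb mulr1]. Qed.

Lemma gprime_cj p : gprime p -> gprime (cj p).
Proof.
move=> hp; split.
- by apply: gintJ; apply: gprime_gint.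
- by rewrite conjc_eq0 gprime_neq0.
- move=> [w [hw e]]; apply: (gprime_nunit hp); exists (cj w); split; first by apply: gintJ.
  by rewrite -[p]cjK -cjM e cj1.
- move=> a b ha hb h.
  have := gprime_dvdM hp (gintJ ha) (gintJ hb); rewrite -cjM.
  move=> /(_ (eq_ind _ (fun t => gdvd t _) (gdvd_cj h) _ (cjK p))).
  by case=> /gdvd_cj; rewrite !cjK; [left|right].
Qed.

Lemma gprime_dvdX p a k : gprime p -> gint a -> gdvd p (a ^+ k) -> gdvd p a.
Proof.
move=> hp ha; elim: k => [|k IH].
  rewrite expr0 => -[w [hw e]]; case: (gprime_nunit hp); exists w; split => //.
by rewrite exprS => /(gprime_dvdM hp ha (gintX k ha)) [|/IH].
Qed.

Lemma gprime_ndvdM p a b : gprime p -> gint a -> gint b -> ~ gdvd p a -> ~ gdvd p b -> ~ gdvd p (a * b).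
Proof. by move=> hp ha hb na nb /(gprime_dvdM hp ha hb) []. Qed.

Lemma gprime_ndvdX p a k : gprime p -> gint a -> ~ gdvd p a -> ~ gdvd p (a ^+ k).
Proof. by move=> hp ha na /(gprime_dvdX hp ha). Qed.

Lemma gprime_powM p a b k : gprime p -> gint a -> gint b -> ~ gdvd p a ->
  gdvd (p ^+ k) (a * b) -> gdvd (p ^+ k) b.
Proof.
move=> hp ha; elim: k b => [|k IH] b hb na; first by rewrite expr0 => _; apply: gdvd1.
rewrite exprS => h.
have : gdvd p (a * b) by apply: gdvd_trans h; apply: gdvd_mulxl; apply: gintX; apply: gprime_gint.
case/(gprime_dvdM hp ha hb) => // -[b' [hb' eb]].
rewrite eb; apply: gdvd_mul; first by apply: gdvd_refl.
apply: IH => //; apply: (@gdvd_cancel p); first by apply: gprime_neq0.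
by rewrite mulrCA -eb.
Qed.

Lemma gpow_bound p z k : gprime p -> gint z -> z != 0 -> gdvd (p ^+ k) z -> (k < gn z)%N.
Proof.
move=> hp hz hz0 h.
have hpk := gn_dvd (gintX k (gprime_gint hp)) hz hz0 h.
have : (gn (p ^+ k) = gn p ^ k)%N.
  elim: k {h hpk} => [|k IH]; first by rewrite expr0 gi1 gn_gi.
  by rewrite exprS gnM ?IH ?expnS //; [apply: gprime_gint | apply: gintX; apply: gprime_gint].
move=> e; rewrite e in hpk; apply: leq_trans hpk.
apply: (@leq_trans (2 ^ k)); first by rewrite ltn_expl.
have h2 := gprime_gn hp; elim: (k) => // j IHj; rewrite !expnS; exact: leq_mul.
Qed.

Lemma gval p z : gprime p -> gint z -> z != 0 ->
  exists e z', [/\ gint z', z = p ^+ e * z', ~ gdvd p z' & (e < gn z)%N].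
Proof.
move=> hp; move: {2}(gn z) (leqnn (gn z)) => n; elim: n z => [|n IH] z hn hz hz0.
  by move: (gn_gt0 hz hz0); rewrite leqn0 in hn; rewrite (eqP hn).
case: (classic (gdvd p z)) => [[z1 [hz1 e]]|nd]; last first.
  by exists 0%N, z; rewrite expr0 mul1r; split => //; apply: gn_gt0.
have hz10 : z1 != 0 by apply: contraNneq hz0 => h; rewrite e h mulr0.
have hlt : (gn z1 < gn z)%N.
  have hgp := gprime_gint hp; rewrite e gnM //.
  by rewrite -[X in (X < _)%N]mul1n ltn_mul2r gn_gt0 // gprime_gn.
have hz1n : (gn z1 <= n)%N by rewrite -ltnS (leq_trans hlt hn).
have [e1 [z' [hz' e' nd' hb]]] := IH z1 hz1n hz1 hz10.
exists e1.+1, z'; split => //; first by rewrite e e' exprS mulrA.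
exact: leq_ltn_trans hb hlt.
Qed.
End G2.


Section G3.
Variable R : realType.
Local Notation C := (R[i]).
Local Notation cj := (@conjc R).
Implicit Types (z w p q a b c d u v x h : C).

Lemma gbezout a x : gint a -> gint x -> a != 0 ->
  exists h u v, [/\ gint h, gint u, gint v, h != 0 & h = a * u + x * v] /\ (gdvd h a /\ gdvd h x).
Proof.
move=> ha hx ha0.
suff: forall n g u v, gint u -> gint v -> g = a * u + x * v -> g != 0 -> (gn g <= n)%N ->
  exists h u v, [/\ gint h, gint u, gint v, h != 0 & h = a * u + x * v] /\ (gdvd h a /\ gdvd h x).
  move=> /(_ (gn a) a 1 0 (gint1 R) (gint0 R)); rewrite mulr1 mulr0 addr0; apply => //.
elim=> [|n IH] g u v hu hv eg hg0 hn.
  have hg : gint g by rewrite eg; apply: gintD; apply: gintM.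
  by move: (gn_gt0 hg hg0); rewrite leqn0 in hn; rewrite (eqP hn).
have hg : gint g by rewrite eg; apply: gintD; apply: gintM.
have [q [r [hq hr ea hr']]] := geuclid ha hg hg0.
case: (eqVneq r 0) => hr0; last first.
  apply: (IH r (1 - u * q) (- (v * q))).
  - by apply: gintB; [apply: gint1 | apply: gintM].
  - by apply: gintN; apply: gintM.
  - have er : r = a - g * q by rewrite ea; ring.
    by rewrite er eg; ring.
  - by [].
  - by rewrite -ltnS (leq_trans hr' hn).
have [q' [r' [hq' hr2 ex hr2']]] := geuclid hx hg hg0.
case: (eqVneq r' 0) => hr20; last first.
  apply: (IH r' (- (u * q')) (1 - v * q')).
  - by apply: gintN; apply: gintM.
  - by apply: gintB; [apply: gint1 | apply: gintM].
  - have er : r' = x - g * q' by rewrite ex; ring.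
    by rewrite er eg; ring.
  - by [].
  - by rewrite -ltnS (leq_trans hr2' hn).
exists g, u, v; split => //; split.
  by exists q; split => //; rewrite ea hr0 addr0.
by exists q'; split => //; rewrite ex hr20 addr0.
Qed.

Lemma gunit_inv u : gint u -> gunit u -> exists u', [/\ gint u', gunit u' & u * u' = 1].
Proof. by move=> hu [w [hw e]]; exists w; split => //; exists u; rewrite mulrC. Qed.

Lemma girr_prime p : gint p -> p != 0 -> ~ gunit p ->
  (forall a b, gint a -> gint b -> p = a * b -> gunit a \/ gunit b) -> gprime p.
Proof.
move=> hp hp0 hnu hirr; split => // a b ha hb hab.
case: (classic (gdvd p a)) => hpa; first by left.
right.
have [h [u [v [[hh hu hv hh0 eh] [[w [hw ew]] hha]]]]] := gbezout hp ha hp0.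
case: (hirr h w hh hw ew) => [[h' [hh' e']]|[w' [hw' e']]].
  have -> : b = p * (u * h' * b) + (a * b) * (v * h').
    by rewrite -[b in LHS]mul1r -e' eh; ring.
  apply: gdvdD; first by apply: gdvd_mulxl; apply: gintM => //; apply: gintM.
  by apply: gdvd_mulr => //; apply: gintM.
exfalso; apply: hpa; apply: gdvd_trans hha.
by exists w'; split => //; rewrite ew -mulrA e' mulr1.
Qed.

Lemma gunit_dvd u z : gint z -> gunit u -> gdvd z u -> gunit z.
Proof. by move=> hz [w [hw e]] [t [ht et]]; exists (t * w); split; [apply: gintM | rewrite mulrA -et]. Qed.

Lemma gprime_factor z : gint z -> z != 0 -> ~ gunit z -> exists p, gprime p /\ gdvd p z.
Proof.
move: {2}(gn z) (leqnn (gn z)) => n; elim: n z => [|n IH] z hn hz hz0 hnu.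
  by move: (gn_gt0 hz hz0); rewrite leqn0 in hn; rewrite (eqP hn).
case: (classic (exists a b, [/\ gint a, gint b, z = a * b, ~ gunit a & ~ gunit b])).
  move=> [a [b [ha hb e na nb]]].
  have ha0 : a != 0 by apply: contraNneq hz0 => h0; rewrite e h0 mul0r.
  have hb0 : b != 0 by apply: contraNneq hz0 => h0; rewrite e h0 mulr0.
  have hlt : (gn a < gn z)%N.
    rewrite e gnM //; rewrite -[X in (X < _)%N]muln1 ltn_mul2l gn_gt0 //=.
    case: (gn b =P 1%N) => [/(gn1_unit hb) //|]; have := gn_gt0 hb hb0.
    by case: (gn b) => [|[|]].
  have han : (gn a <= n)%N by rewrite -ltnS (leq_trans hlt hn).
  have [p [hp hpa]] := IH a han ha ha0 na.
  by exists p; split => //; rewrite e; apply: gdvd_mulr.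
move=> hne; exists z; split; last by apply: gdvd_refl.
apply: girr_prime => // a b ha hb e.
case: (classic (gunit a)) => ua; first by left.
case: (classic (gunit b)) => ub; first by right.
by exfalso; apply: hne; exists a, b.
Qed.

Lemma gprime_assoc p q : gprime p -> gprime q -> gdvd p q -> exists u, [/\ gint u, gunit u & q = p * u].
Proof.
move=> hp hq [u [hu e]].
have hgp := gprime_gint hp; have hgq := gprime_gint hq.
case: (gprime_dvdM hq hgp hu (eq_ind _ (gdvd q) (gdvd_refl q) _ e)).
  move=> [s [hs es]]; exists u; split => //.
  exists s; split => //.
  apply: (mulfI (gprime_neq0 hq)); rewrite mulr1 [in RHS]e es; ring.
move=> [t [ht et]]; exfalso; apply: (gprime_nunit hp); exists t; split => //.
apply: (mulfI (gprime_neq0 hq)); rewrite mulr1 [in RHS]e et; ring.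
Qed.

Lemma gdvd_unit_nprime p u : gprime p -> gunit u -> ~ gdvd p u.
Proof. by move=> hp hu /(gunit_dvd (gprime_gint hp) hu) /(gprime_nunit hp). Qed.

Lemma uniformN (D : C) (F : C -> nat -> Prop) :
  gint D -> D != 0 ->
  (forall p N N', F p N -> (N <= N')%N -> F p N') ->
  (forall p u N, gprime p -> gunit u -> gint u -> F p N -> F (p * u) N) ->
  (forall p, gprime p -> gdvd p D -> exists N, F p N) ->
  exists N, forall p, gprime p -> gdvd p D -> F p N.
Proof.
move=> hD hD0 Fm Fa.
move: {2}(gn D) (leqnn (gn D)) => n; elim: n D hD hD0 => [|n IH] D hD hD0 hn hF.
  by move: (gn_gt0 hD hD0); rewrite leqn0 in hn; rewrite (eqP hn).
case: (classic (gunit D)) => hu.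
  by exists 0%N => p hp /(gunit_dvd (gprime_gint hp) hu) /(gprime_nunit hp).
have [pi [hpi [D1 [hD1 eD]]]] := gprime_factor hD hD0 hu.
have hD10 : D1 != 0 by apply: contraNneq hD0 => h0; rewrite eD h0 mulr0.
have hlt : (gn D1 < gn D)%N.
  rewrite eD gnM //; last exact: gprime_gint.
  by rewrite -[X in (X < _)%N]mul1n ltn_mul2r gn_gt0 // gprime_gn.
have [N1 h1] : exists N, forall p, gprime p -> gdvd p D1 -> F p N.
  apply: IH => //; first by rewrite -ltnS (leq_trans hlt hn).
  move=> p hp hpD1; apply: hF => //; rewrite eD; apply: gdvd_mull => //; exact: gprime_gint.
have [N0 h0] := hF pi hpi (eq_ind _ (gdvd pi) (gdvd_mulxl pi hD1) _ (esym eD)).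
exists (maxn N0 N1) => p hp hpD.
move: hpD; rewrite eD => /(gprime_dvdM hp (gprime_gint hpi) hD1) [hppi|hpD1].
  have [u [hug hu' epi]] := gprime_assoc hp hpi hppi.
  have [u' [hu'g hu'u eu]] := gunit_inv hug hu'.
  have -> : p = pi * u' by rewrite epi -mulrA eu mulr1.
  by apply: Fa => //; apply: Fm h0 _; rewrite leq_maxl.
by apply: Fm (h1 p hp hpD1) _; rewrite leq_maxr.
Qed.

Lemma gcomb A B : gint A -> A != 0 -> gint B ->
  (forall p k, gprime p -> gdvd (p ^+ k) A -> gdvd (p ^+ k) B) -> gdvd A B.
Proof.
move: {2}(gn A) (leqnn (gn A)) => n; elim: n A B => [|n IH] A B hn hA hA0 hB hk.
  by move: (gn_gt0 hA hA0); rewrite leqn0 in hn; rewrite (eqP hn).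
case: (classic (gunit A)) => hu; first by apply: gdvd_unit.
have [pi [hpi [A1 [hA1 eA]]]] := gprime_factor hA hA0 hu.
have hgpi := gprime_gint hpi.
have hA10 : A1 != 0 by apply: contraNneq hA0 => h0; rewrite eA h0 mulr0.
have hlt : (gn A1 < gn A)%N.
  rewrite eA gnM //.
  by rewrite -[X in (X < _)%N]mul1n ltn_mul2r gn_gt0 // gprime_gn.
have [B1 [hB1 eB]] : gdvd pi B.
  by rewrite -[pi]expr1; apply: hk => //; rewrite expr1 eA; apply: gdvd_mulxl.
rewrite eA eB; apply: gdvd_mul; first exact: gdvd_refl.
apply: IH => //; first by rewrite -ltnS (leq_trans hlt hn).
move=> p k hp hpk.
case: (classic (gdvd p pi)) => hppi; last first.
  apply: (gprime_powM hp hgpi hB1) => //; rewrite -eB; apply: hk => //.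
  by rewrite eA; apply: gdvd_mull.
have [u [hgu hun epi]] := gprime_assoc hp hpi hppi.
have [u' [hu'g hu'u eu]] := gunit_inv hgu hun.
have hpkA : gdvd (p ^+ k.+1) A.
  rewrite eA epi exprSr (_ : p * u * A1 = (A1 * u) * p); last by ring.
  by apply: gdvd_mul; [apply: gdvd_mulr | apply: gdvd_refl].
have h' : gdvd (p ^+ k) (u * B1).
  apply: (@gdvd_cancel R p); first exact: gprime_neq0.
  by rewrite -exprS mulrA -epi -eB; apply: hk.
have -> : B1 = u' * (u * B1) by rewrite mulrA [u' * u]mulrC eu mul1r.
by apply: gdvd_mull.
Qed.
End G3.


Lemma polyXdec (Rg : nzRingType) (Q : {poly Rg}) : Q = Poly (behead Q) * 'X + (Q`_0)%:P.
Proof.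
rewrite -[Q in LHS]polyseqK; case: (polyseq Q) => [|c s] /=.
  by rewrite mul0r add0r polyC0.
by rewrite cons_poly_def.
Qed.

Section G4.
Variable R : realType.
Local Notation C := (R[i]).
Local Notation cj := (@conjc R).
Implicit Types (z w p q a b c d u v x h : C).

Definition ev (Q : {poly int}) (z : C) := (map_poly intr Q).[z].

Lemma ev_cons Q (c : int) z : ev (Q * 'X + c%:P) z = ev Q z * z + c%:~R.
Proof. by rewrite /ev rmorphD rmorphM /= map_polyX map_polyC hornerMXaddC. Qed.
Lemma ev0 z : ev 0 z = 0.
Proof. by rewrite /ev rmorph0 horner0. Qed.
Lemma evB Q1 Q2 z : ev (Q1 - Q2) z = ev Q1 z - ev Q2 z.
Proof. by rewrite /ev rmorphB hornerD hornerN. Qed.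
Lemma evC (c : int) z : ev c%:P z = c%:~R.
Proof. by rewrite /ev map_polyC hornerC. Qed.
Lemma evCX (c : int) z : ev (c%:P * 'X) z = c%:~R * z.
Proof. by rewrite /ev rmorphM /= map_polyC map_polyX hornerMX hornerC. Qed.
Lemma evM Q1 Q2 z : ev (Q1 * Q2) z = ev Q1 z * ev Q2 z.
Proof. by rewrite /ev rmorphM hornerM. Qed.
Lemma evXn k z : ev ('X ^+ k) z = z ^+ k.
Proof. by rewrite /ev rmorphXn /= map_polyX hornerXn. Qed.
Lemma evD Q1 Q2 z : ev (Q1 + Q2) z = ev Q1 z + ev Q2 z.
Proof. by rewrite /ev rmorphD hornerD. Qed.
Lemma evZ (c : int) Q z : ev (c *: Q) z = c%:~R * ev Q z.
Proof. by rewrite -mul_polyC evM evC. Qed.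

Lemma ev_sum (I : Type) (r : seq I) (P : pred I) (F : I -> {poly int}) z :
  ev (\sum_(i <- r | P i) F i) z = \sum_(i <- r | P i) ev (F i) z.
Proof. by rewrite /ev rmorph_sum horner_sum. Qed.

Lemma coef0_cons (Q : {poly int}) (c : int) : (Q * 'X + c%:P)`_0 = c.
Proof. by rewrite coefD coefMX coefC /= add0r. Qed.

Lemma cj_int (t : int) : cj (t%:~R) = t%:~R.
Proof. by rewrite gi_int gi_conj oppr0. Qed.

Lemma tr_int w : gint w -> exists t : int, t%:~R = w + cj w.
Proof.
move=> /gintP[x [y ->]]; exists (x + x); rewrite gi_conj gi_add gi_int; congr gi; lia.
Qed.

Lemma gdvd_int_int (t s : int) : gdvd (t%:~R : C) (s%:~R) -> (t %| s)%Z.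
Proof.
move=> [w [/gintP[x [y ew]] e]]; move: e; rewrite ew !gi_int gi_mul => /gi_inj [e1 _].
by apply/dvdzP; exists x; rewrite e1 mul0r subr0 mulrC.
Qed.

Variables (n D : C) (a0 a1 a2 : int).
Hypotheses (hn : gint n) (hD : gint D) (hn0 : n != 0) (hD0 : D != 0)
  (hcop : forall p, gprime p -> gdvd p n -> gdvd p D -> False)
  (hdelta : D * cj n - cj D * n != 0)
  (hrel : a0%:~R * (D / n) ^+ 2 + a1%:~R * (D / n) + a2%:~R = 0 :> C)
  (ha2 : (a2 %| (gn D)%:Z)%Z).

Local Notation beta := (D / n).
Local Notation w0 := (D * cj n).
Local Notation NDc := (D * cj D).
Local Notation mm := (n * cj n).
Local Notation delta := (D * cj n - cj D * n).

Definition R0 := (gn NDc + gn delta)%N.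
Definition BB := gn D.

Lemma nbeta : n * beta = D.
Proof. by rewrite mulrC divfK. Qed.

Lemma L1 Q : exists s H, gint H /\ n ^+ s * ev Q beta = (Q`_0)%:~R * n ^+ s + D * H.
Proof.
elim/poly_ind: Q => [|Q c [s [H [hH eH]]]].
  by exists 0%N, 0; split; [apply: gint0 | rewrite ev0 coef0 rmorph0; ring].
exists s.+1, ((Q`_0)%:~R * n ^+ s + D * H); split.
  by apply: gintD; apply: gintM => //; [apply: gint_int | apply: gintX].
rewrite ev_cons coef0_cons.
have -> : n ^+ s.+1 * (ev Q beta * beta + c%:~R) = (n * beta) * (n ^+ s * ev Q beta) + c%:~R * n ^+ s.+1.
  by rewrite exprS; ring.
by rewrite eH nbeta; ring.
Qed.

Lemma L2 Q : exists s (X Y : int),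
  mm ^+ s * ev Q beta = (Q`_0)%:~R * mm ^+ s + X%:~R * w0 + Y%:~R * NDc.
Proof.
have [T hT] := tr_int (gintM hD (gintJ hn)).
have emm : mm = (gn n)%:R by rewrite gnE.
have eND : NDc = (gn D)%:R by rewrite gnE.
have mbeta : mm * beta = w0 by rewrite -[in RHS]nbeta; ring.
have w2 : w0 * w0 = T%:~R * w0 - mm * NDc.
  by rewrite hT cjM cjK; ring.
elim/poly_ind: Q => [|Q c [s [X [Y eH]]]].
  by exists 0%N, 0, 0; rewrite ev0 coef0 !rmorph0; ring.
exists s.+1, ((Q`_0) * (gn n)%:Z ^+ s + X * T + Y * (gn D)%:Z), (- X * (gn n)%:Z).
rewrite ev_cons coef0_cons.
have -> : mm ^+ s.+1 * (ev Q beta * beta + c%:~R) = (mm * beta) * (mm ^+ s * ev Q beta) + c%:~R * mm ^+ s.+1.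
  by rewrite exprS; ring.
rewrite eH mbeta !rmorphD !rmorphM !rmorphN !rmorphXn /=.
have -> : ((gn n)%:Z%:~R : C) = mm by rewrite emm.
have -> : ((gn D)%:Z%:~R : C) = NDc by rewrite eND.
apply/eqP; rewrite -subr_eq0; apply/eqP.
have -> : forall e1 e2 : C, e1 - e2 = (e1 - e2 - X%:~R * (w0 * w0 - (T%:~R * w0 - mm * NDc))) by move=> e1 e2; rewrite w2 subrr mulr0 subr0.
ring.
Qed.

Lemma pval_mono p z M N : gint p -> (N <= M)%N -> pval_ge p z M -> pval_ge p z N.
Proof.
move=> hp hNM [u [v [hu hv hnd e]]]; exists (p ^+ (M - N) * u), v; split => //.
  by apply: gintM => //; apply: gintX.
by rewrite e mulrA -exprD subnKC.
Qed.

Lemma gint_mm : gint mm. Proof. by apply: gintM => //; apply: gintJ. Qed.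
Lemma gint_NDc : gint NDc. Proof. by apply: gintM => //; apply: gintJ. Qed.
Lemma gint_w0 : gint w0. Proof. by apply: gintM => //; apply: gintJ. Qed.
Lemma gint_delta : gint delta.
Proof. by apply: gintB; apply: gintM => //; apply: gintJ. Qed.
Lemma NDc_neq0 : NDc != 0. Proof. by rewrite mulf_neq0 // conjc_eq0. Qed.

Lemma Kdiv Q : (forall p, gprime p -> gdvd p D -> pval_ge p (ev Q beta) R0) ->
  gdvd NDc ((Q`_0)%:~R).
Proof.
move=> HQ.
set c0 : C := (Q`_0)%:~R.
have hc0 : gint c0 by apply: gint_int.
have main : forall p k, gprime p -> gdvd p D -> gdvd (p ^+ k) NDc -> gdvd (p ^+ k) c0.
  move=> p k hp hpD hpk.
  have hgp := gprime_gint hp.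
  have hk : (k < gn NDc)%N := gpow_bound hp gint_NDc NDc_neq0 hpk.
  have [u [v [hu hv hnv e]]] := HQ p hp hpD.
  have hpn : ~ gdvd p n := fun hh => @hcop p hp hh hpD.
  case: (classic (gdvd p (cj D))) => hpcD.
  - have hcp := gprime_cj hp.
    have hcpD : gdvd (cj p) D by rewrite -[D]cjK; apply: gdvd_cj.
    have [u' [v' [hu' hv' hnv' e']]] := HQ (cj p) hcp hcpD.
    have [s [X [Y eL]]] := L2 Q.
    have hL : gint (mm ^+ s * ev Q beta).
      rewrite eL; apply: gintD; first apply: gintD.
      + by apply: gintM => //; apply: gintX; apply: gint_mm.
      + by apply: gintM; [apply: gint_int | apply: gint_w0].
      + by apply: gintM; [apply: gint_int | apply: gint_NDc].
    have hLp : gdvd (p ^+ R0) (mm ^+ s * ev Q beta).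
      apply: (gprime_powM hp hv hL hnv).
      exists (mm ^+ s * u); split; first by apply: gintM => //; apply: gintX; apply: gint_mm.
      have -> : v * (mm ^+ s * ev Q beta) = mm ^+ s * (ev Q beta * v) by ring.
      by rewrite e; ring.
    have hLcp : gdvd ((cj p) ^+ R0) (mm ^+ s * ev Q beta).
      apply: (gprime_powM hcp hv' hL hnv').
      exists (mm ^+ s * u'); split; first by apply: gintM => //; apply: gintX; apply: gint_mm.
      have -> : v' * (mm ^+ s * ev Q beta) = mm ^+ s * (ev Q beta * v') by ring.
      by rewrite e'; ring.
    have hLc : gdvd (p ^+ R0) (cj (mm ^+ s * ev Q beta)).
      by have := gdvd_cj hLcp; rewrite cjX cjK.
    have eLL : mm ^+ s * ev Q beta - cj (mm ^+ s * ev Q beta) = X%:~R * delta.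
      rewrite eL !cjD !cjM !cjX ?cj_int ?cjM ?cjK [cj n * n]mulrC; ring.
    have hXd : gdvd (p ^+ R0) (X%:~R * delta) by rewrite -eLL; apply: gdvdB.
    have [j [d' [hd' ed hnd' hj]]] := gval hp gint_delta hdelta.
    have hjR : (j <= R0)%N by rewrite /R0 (leq_trans (ltnW hj)) // leq_addl.
    have hXj : gdvd (p ^+ (R0 - j)) (d' * X%:~R).
      apply: (@gdvd_cancel R (p ^+ j)); first by rewrite expf_neq0 // gprime_neq0.
      by rewrite -exprD subnKC // (_ : p ^+ j * (d' * X%:~R) = X%:~R * delta) // ed; ring.
    have hX : gdvd (p ^+ k) X%:~R.
      apply: (@gdvd_trans R _ (p ^+ (R0 - j))); last exact: (gprime_powM hp hd' (@gint_int R X) hnd' hXj).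
      apply: gdvd_expl => //; rewrite leq_subRL // /R0.
      by rewrite addnC leq_add // ltnW.
    have hkR : (k <= R0)%N by rewrite /R0 (leq_trans (ltnW hk)) // leq_addr.
    have hmm : ~ gdvd p mm.
      apply: (gprime_ndvdM hp hn (gintJ hn) hpn) => /gdvd_cj; rewrite cjK => hcpn.
      exact: (@hcop (cj p) hcp hcpn hcpD).
    have := gprime_powM hp (gintX s gint_mm) hc0 (gprime_ndvdX (k:=s) hp gint_mm hmm).
    apply.
    have -> : mm ^+ s * c0 = mm ^+ s * ev Q beta - X%:~R * w0 - Y%:~R * NDc by rewrite eL /c0; ring.
    apply: gdvdB; first apply: gdvdB.
    + by apply: gdvd_trans hLp; apply: gdvd_expl.
    + by apply: gdvd_mulr => //; apply: gint_w0.
    + by apply: gdvd_mull => //; apply: gint_int.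
  - have hpkD : gdvd (p ^+ k) D.
      by apply: (gprime_powM hp (gintJ hD) hD hpcD); rewrite mulrC.
    have [s [H [hH eH]]] := L1 Q.
    have hkR : (k <= R0)%N by rewrite /R0 (leq_trans (ltnW hk)) // leq_addr.
    have hnv' : ~ gdvd p (n ^+ s * v).
      by apply: gprime_ndvdM => //; [apply: gintX | apply: gprime_ndvdX].
    have := gprime_powM hp (gintM (gintX s hn) hv) hc0 hnv'; apply.
    have -> : n ^+ s * v * c0 = n ^+ s * (ev Q beta * v) - D * (H * v).
      by rewrite [n ^+ s * (_ * v)]mulrA eH /c0; ring.
    rewrite e; apply: gdvdB.
      apply: gdvd_mull; first by apply: gdvd_trans (gdvd_expl hgp hkR) _; apply: gdvd_mulxl.
      by apply: gintX.
    by apply: gdvd_mulr => //; apply: gintM.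
apply: gcomb => //; [apply: gint_NDc | apply: NDc_neq0 |] => p k hp hpk.
case: k hpk => [|k] hpk; first by rewrite expr0; apply: gdvd1.
case: (classic (gdvd p D)) => hpD; first by apply: main.
have hp1 : gdvd p NDc by apply: gdvd_trans hpk; rewrite exprS; apply: gdvd_mulxl; apply: gintX; apply: gprime_gint.
have hpcD : gdvd p (cj D).
  by case: (gprime_dvdM hp hD (gintJ hD) hp1).
have hcpD : gdvd (cj p) D by rewrite -[D]cjK; apply: gdvd_cj.
have := main (cj p) k.+1 (gprime_cj hp) hcpD.
have -> : (cj p) ^+ k.+1 = cj (p ^+ k.+1) by rewrite cjX.
move=> /(_ _) h.
have h2 : gdvd (cj (p ^+ k.+1)) NDc.
  by have := gdvd_cj hpk; rewrite cjM cjK mulrC.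
by have := gdvd_cj (h h2); rewrite cjK /c0 cj_int.
Qed.

Lemma Kint Q : (forall p, gprime p -> gdvd p D -> pval_ge p (ev Q beta) R0) ->
  (a2 %| Q`_0)%Z.
Proof.
move=> HQ; apply: (dvdz_trans ha2); apply: gdvd_int_int.
by have := Kdiv HQ; rewrite -gnE.
Qed.

Lemma beta_neq0 : beta != 0. Proof. by rewrite mulf_neq0 // invr_eq0. Qed.

Lemma pval_beta p z M : gprime p -> gdvd p D -> pval_ge p z M -> pval_ge p (beta * z) M.
Proof.
move=> hp hpD [u [v [hu hv hnv e]]].
have hpn : ~ gdvd p n := fun hh => @hcop p hp hh hpD.
exists (D * u), (v * n); split => //; first by apply: gintM.
  by apply: gintM.
  exact: gprime_ndvdM.
have -> : beta * z * (v * n) = (z * v) * (n * beta) by ring.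
by rewrite e nbeta; ring.
Qed.

Lemma pval_alpha p z M : gprime p -> gdvd p D -> pval_ge p z (M + BB) -> pval_ge p (n / D * z) M.
Proof.
move=> hp hpD [u [v [hu hv hnv e]]].
have hgp := gprime_gint hp.
have [e0 [D' [hD' eD hnD' he]]] := gval hp hD hD0.
have hp0 : p != 0 := gprime_neq0 hp.
exists (n * p ^+ (BB - e0) * u), (v * D'); split => //.
- by apply: gintM => //; apply: gintM => //; apply: gintX.
- by apply: gintM.
- exact: gprime_ndvdM.
have hD'0 : D' != 0 by apply: contraNneq hD0 => h0; rewrite eD h0 mulr0.
have hpe0 : p ^+ e0 != 0 by rewrite expf_neq0.
have -> : n / D * z * (v * D') = n * (z * v) / p ^+ e0.
  by rewrite eD; field; rewrite hpe0 hD'0.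
rewrite e (_ : (M + BB)%N = (M + (BB - e0)) + e0)%N; last by rewrite -addnA subnK // ltnW.
by rewrite !exprD; field; rewrite ?hpe0 ?hp0.
Qed.

Lemma a2_rel : (a2%:~R : C) = - (beta * (a1%:~R + a0%:~R * beta)).
Proof. by apply/eqP; rewrite -subr_eq0 opprK; apply/eqP; rewrite -hrel; ring. Qed.

Lemma peel j Q : (forall p, gprime p -> gdvd p D -> pval_ge p (ev Q beta) (R0 + j * BB)) ->
  exists Q2, ev Q beta = beta ^+ j * ev Q2 beta.
Proof.
elim: j Q => [|j IH] Q HQ; first by exists Q; rewrite expr0 mul1r.
have := Kint (fun p hp hpD => pval_mono (gprime_gint hp) (leq_addr _ _) (HQ p hp hpD)).
move=> /dvdzP [c ec].
set Q1 := Poly (behead Q).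
set Q2 := Q1 - (c * a1)%:P - (c * a0)%:P * 'X.
have eQ : ev Q beta = beta * ev Q2 beta.
  rewrite [Q in LHS]polyXdec -/Q1 ev_cons ec rmorphM /= a2_rel /Q2 !evB evC evCX !rmorphM /=.
  ring.
have hQ2 : ev Q2 beta = n / D * ev Q beta.
  by rewrite eQ mulrA (_ : n / D * beta = 1) ?mul1r //; field; rewrite hn0 hD0.
have HQ2 : forall p, gprime p -> gdvd p D -> pval_ge p (ev Q2 beta) (R0 + j * BB).
  move=> p hp hpD; rewrite hQ2; apply: pval_alpha => //.
  by rewrite -addnA -mulSnr; apply: HQ.
have [Q3 e3] := IH Q2 HQ2.
by exists Q3; rewrite eQ e3 exprS mulrA.
Qed.

Local Notation alpha := (n / D).

Lemma alpha_beta : alpha * beta = 1.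
Proof. by field; rewrite hn0 hD0. Qed.
Lemma alpha_neq0 : alpha != 0. Proof. by rewrite mulf_neq0 // invr_eq0. Qed.
Lemma inv_alpha : alpha^-1 = beta. Proof. by rewrite invf_div. Qed.

Lemma pval_beta1 p z M : gprime p -> gdvd p D -> pval_ge p z M -> pval_ge p (beta * z) M.+1.
Proof.
move=> hp [D' [hD' eD]] [u [v [hu hv hnv e]]].
have hpD : gdvd p D by exists D'.
have hpn : ~ gdvd p n := fun hh => @hcop p hp hh hpD.
exists (D' * u), (v * n); split => //; first by apply: gintM.
  by apply: gintM.
  exact: gprime_ndvdM.
have -> : beta * z * (v * n) = (z * v) * (n * beta) by ring.
by rewrite e nbeta eD exprS; ring.
Qed.

Lemma pval_betaX p z M j : gprime p -> gdvd p D -> pval_ge p z M -> pval_ge p (beta ^+ j * z) (M + j).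
Proof.
move=> hp hpD h; elim: j => [|j IH]; first by rewrite expr0 mul1r addn0.
by rewrite exprS -mulrA addnS; apply: pval_beta1.
Qed.

Lemma pval_alphaX p z M j : gprime p -> gdvd p D -> pval_ge p z (M + j * BB) -> pval_ge p (alpha ^+ j * z) M.
Proof.
move=> hp hpD; elim: j M z => [|j IH] M z h; first by rewrite expr0 mul1r; move: h; rewrite mul0n addn0.
rewrite exprSr -mulrA; apply: IH; apply: pval_alpha => //.
by rewrite -addnA -mulSnr.
Qed.

Lemma pval_assoc p z M u : gint p -> gint u -> gunit u -> pval_ge p z M -> pval_ge (p * u) z M.
Proof.
move=> hgp hgu hun [a [v [ha hv hnv e]]].
have [w [hw _ euw]] := gunit_inv hgu hun.
exists (w ^+ M * a), v; split => //.
- by apply: gintM => //; apply: gintX.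
- by move=> [t [ht et]]; apply: hnv; exists (u * t); split; [apply: gintM | rewrite et mulrA].
by rewrite e exprMn -mulrA; congr (_ * _); rewrite mulrA -exprMn euw expr1n mul1r.
Qed.

Lemma pval0_ev p Q : gprime p -> gdvd p D -> pval_ge p (ev Q beta) 0.
Proof.
move=> hp hpD.
have hpn : ~ gdvd p n := fun hh => @hcop p hp hh hpD.
have [s [H [hH eH]]] := L1 Q.
exists ((Q`_0)%:~R * n ^+ s + D * H), (n ^+ s); split.
- by apply: gintD; apply: gintM => //; [apply: gint_int | apply: gintX].
- by apply: gintX.
- exact: gprime_ndvdX.
by rewrite expr0 mul1r -eH mulrC.
Qed.

Variables (k : int) (dg : int -> nat).

Definition Qp (N : nat) : {poly int} := \sum_(i < N.+1) (dg (k - i%:Z))%:Z *: 'X^i.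

Lemma ev_Qp N z : ev (Qp N) z = \sum_(i < N.+1) (dg (k - i%:Z))%:R * z ^+ i.
Proof.
rewrite /Qp ev_sum; apply: eq_bigr => i _.
by rewrite evZ evXn.
Qed.

Lemma psumE N : psum alpha k dg N = alpha ^ k * ev (Qp N) beta.
Proof.
rewrite /psum ev_Qp big_distrr; apply: eq_bigr => i _ /=.
rewrite mulrCA; congr (_ * _).
by rewrite expfzDr ?alpha_neq0 // -exprz_inv inv_alpha.
Qed.

Lemma ntailE m : ntail alpha k dg m = alpha ^+ m * ev (Qp m) beta.
Proof.
rewrite /ntail ev_Qp big_distrr; apply: eq_bigr => i _ /=.
rewrite mulrCA; congr (_ * _).
have hi : (i <= m)%N by rewrite -ltnS.
have -> : alpha ^+ m = alpha ^+ (m - i) * alpha ^+ i by rewrite -exprD subnK.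
by rewrite -mulrA -exprMn alpha_beta expr1n mulr1.
Qed.

Lemma Qp_split m N : (m <= N)%N -> exists Rest, Qp N = Qp m + 'X^(m.+1) * Rest.
Proof.
elim: N => [|N IH].
  by rewrite leqn0 => /eqP ->; exists 0; rewrite mulr0 addr0.
rewrite leq_eqVlt => /orP [/eqP ->|]; first by exists 0; rewrite mulr0 addr0.
rewrite ltnS => hmN; have [Rest eR] := IH hmN.
exists (Rest + (dg (k - N.+1%:Z))%:Z *: 'X^(N - m)).
rewrite /Qp big_ord_recr /= -/(Qp N) eR mulrDr -addrA; congr (_ + (_ + _)).
rewrite -scalerAr -exprD; congr (_ *: 'X^_).
by rewrite addSn subnKC.
Qed.

Lemma ntail_Zpoly m : in_Zpoly alpha (ntail alpha k dg m).
Proof.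
exists (\sum_(i < m.+1) (dg (k - i%:Z))%:Z *: 'X^(m - i)).
rewrite -/(ev _ alpha) /ntail ev_sum; apply: eq_bigr => i _.
by rewrite evZ evXn.
Qed.

Lemma dir1 : (forall m, in_Lambda alpha (ntail alpha k dg m)) ->
  forall p, gprime p -> gdvd p D -> padic_to0 p alpha k dg.
Proof.
move=> HL p hp hpD M.
exists (M + `|k|%N * BB)%N => m hm.
have [_ [q eq]] := HL m.
rewrite inv_alpha -/(ev q beta) in eq.
have e1 : ev (Qp m) beta = beta ^+ m.+1 * ev q beta.
  have h := ntailE m; rewrite eq in h.
  rewrite exprSr -mulrA h mulrA -exprMn (mulrC beta) alpha_beta expr1n mul1r //.
rewrite psumE e1.
have hv := pval_betaX m.+1 hp hpD (pval0_ev q hp hpD); rewrite add0n in hv.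
case ek: k hm => [j|j] hm.
  rewrite -exprnP; apply: pval_alphaX => //.
  apply: (pval_mono _ _ hv); first exact: gprime_gint.
  by move: hm => /= hm; lia.
rewrite NegzE -exprz_inv inv_alpha -exprnP mulrA -exprD.
apply: (pval_mono _ _ (pval_betaX (j.+1 + m.+1) hp hpD (pval0_ev q hp hpD))); first exact: gprime_gint.
by rewrite add0n; move: hm => /= hm; lia.
Qed.

Lemma dir2 : (forall p, gprime p -> gdvd p D -> padic_to0 p alpha k dg) ->
  forall m, in_Lambda alpha (ntail alpha k dg m).
Proof.
move=> HP m; split; first exact: ntail_Zpoly.
pose Mt := (R0 + m.+1 * BB + `|k|%N * BB)%N.
have [N0 hN0] := @uniformN R D (fun p N => forall N', (N <= N')%N -> pval_ge p (psum alpha k dg N') Mt) hD hD0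
  (fun p N N' hh hNN' N'' hN'' => hh N'' (leq_trans hNN' hN''))
  (fun p u N hp hu hgu hh N' hN' => pval_assoc (gprime_gint hp) hgu hu (hh N' hN'))
  (fun p hp hpD => HP p hp hpD Mt).
pose N := maxn N0 m.
have hQN : forall p, gprime p -> gdvd p D -> pval_ge p (ev (Qp N) beta) (R0 + m.+1 * BB).
  move=> p hp hpD; have h := hN0 p hp hpD N (leq_maxl _ _); rewrite psumE in h.
  case ek: k h => [j|j] h.
    have -> : ev (Qp N) beta = beta ^+ j * (alpha ^+ j * ev (Qp N) beta).
      by rewrite mulrA -exprMn (mulrC beta) alpha_beta expr1n mul1r.
    apply: (pval_mono _ _ (pval_betaX j hp hpD h)); first exact: gprime_gint.
    by rewrite /Mt ek /=; lia.
  have -> : ev (Qp N) beta = alpha ^+ j.+1 * (alpha ^ Negz j * ev (Qp N) beta).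
    by rewrite NegzE -exprz_inv inv_alpha -exprnP mulrA -exprMn alpha_beta expr1n mul1r.
  by apply: pval_alphaX => //; rewrite /Mt ek in h.
have [Q2 e2] := peel hQN.
have [Rest eR] := Qp_split (leq_maxr N0 m : (m <= N)%N).
exists (Q2 - Rest).
rewrite inv_alpha ntailE -/(ev (Q2 - Rest) beta).
have -> : ev (Qp m) beta = beta ^+ m.+1 * ev (Q2 - Rest) beta.
  by rewrite evB mulrBr -e2 eR evD evM evXn addrK.
rewrite exprS.
have -> : alpha ^+ m * (beta * beta ^+ m * ev (Q2 - Rest) beta) =
  beta * ((alpha * beta) ^+ m * ev (Q2 - Rest) beta) by rewrite [(alpha * beta) ^+ m]exprMn; ring.
by rewrite alpha_beta expr1n mul1r.
Qed.
End G4.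


Lemma cj_real (R : realType) (z : R[i]) : conjc z = z -> complex.Im z = 0.
Proof.
case: z => a b /= [] h.
have : b + b = 0 by rewrite -{1}h addNr.
by move/eqP; rewrite -mulr2n -mulr_natr mulf_eq0 pnatr_eq0 orbF => /eqP.
Qed.

Lemma cj_div (R : realType) (x y : R[i]) : conjc (x / y) = conjc x / conjc y.
Proof. by rewrite cjM conjc_inv. Qed.

Lemma conj_root (R : realType) (a0 a1 a2 : int) (z : R[i]) :
  a2%:~R * z ^+ 2 + a1%:~R * z + a0%:~R = 0 ->
  a2%:~R * conjc z ^+ 2 + a1%:~R * conjc z + a0%:~R = 0.
Proof.
move=> h; have := congr1 (@conjc R) h; rewrite cjD cjD cjM cjX cjM !cj_int.
by have -> : conjc (0 : R[i]) = 0 by apply/eqP; rewrite conjc_eq0.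
Qed.

Theorem mainTheorem11 (R : realType) (alpha : R[i]) (a0 a1 a2 : int)
    (num den : R[i]) (x : R[i]) (k : int) (d : int -> nat) :
  in_Qi alpha -> complex.Im alpha != 0 -> 1 < `|alpha| ->
  gcdz (gcdz a0 a1) a2 = 1 -> 0 < a2 ->
  a2%:~R * alpha ^+ 2 + a1%:~R * alpha + a0%:~R = 0 ->
  gint num -> gint den -> den != 0 -> alpha = num / den ->
  (forall p, gprime p -> gdvd p num -> gdvd p den -> False) ->
  (forall j : int, j <= k -> (d j < `|a0|)%N) -> d k != 0%N ->
  series_to alpha k d x ->
  (alpha_expansion alpha `|a0| k d x <->
   forall p, gprime p -> gdvd p den -> padic_to0 p alpha k d).
Proof.
move=> _ hIm _ hgcd ha2pos hf hn hD hD0 ealpha hcop hdig hdk hser.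
subst alpha.
have hn0 : num != 0.
  by apply: contraNneq hIm => h0; rewrite h0 mul0r.
have hcD0 : conjc den != 0 by rewrite conjc_eq0.
have hcn0 : conjc num != 0 by rewrite conjc_eq0.
have hnreal : conjc (num / den) != num / den.
  by apply: contra_neq hIm => /cj_real ->.
have hdelta : den * conjc num - conjc den * num != 0.
  apply: contra_neq hnreal => /eqP; rewrite subr_eq0 => /eqP h.
  rewrite cj_div; apply/eqP; rewrite eqr_div //; apply/eqP; rewrite mulrC h; by rewrite mulrC.
have hrel : a0%:~R * (den / num) ^+ 2 + a1%:~R * (den / num) + a2%:~R = 0 :> R[i].
  have h : (den / num) ^+ 2 * (a2%:~R * (num / den) ^+ 2 + a1%:~R * (num / den) + a0%:~R) = 0.
    by rewrite hf mulr0.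
  by rewrite -h; field; rewrite hn0 hD0.
have ha2 : (a2 %| (gn den)%:Z)%Z.
  move: hf hnreal; set al := num / den => hf hnreal.
  have hf' : a2%:~R * conjc al ^+ 2 + a1%:~R * conjc al + a0%:~R = 0 :> R[i].
    exact: conj_root.
  have hsum : a2%:~R * (al + conjc al) = - a1%:~R :> R[i].
    have : (al - conjc al) * (a2%:~R * (al + conjc al) + a1%:~R) = 0.
      by rewrite -[RHS](subrr 0) -{1}hf -hf'; ring.
    move/eqP; rewrite mulf_eq0 subr_eq0 eq_sym (negbTE hnreal) /= addr_eq0 => /eqP.
    done.
  have hprod : a2%:~R * (al * conjc al) = a0%:~R :> R[i].
    apply/eqP; rewrite -subr_eq0 -oppr_eq0; apply/eqP; rewrite -hf.
    have -> : a1%:~R = - (a2%:~R * (al + conjc al)) :> R[i] by rewrite hsum opprK.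
    ring.
  have hgN : ((gn num)%:R : R[i]) = num * conjc num by rewrite gnE.
  have hgD : ((gn den)%:R : R[i]) = den * conjc den by rewrite gnE.
  have [t ht] := tr_int (gintM hn (gintJ hD)).
  rewrite cjM cjK in ht.
  have e1 : a2 * (gn num)%:Z = a0 * (gn den)%:Z.
    apply: (@intr_inj R[i]); rewrite !rmorphM /=.
    have -> : (((gn num)%:Z)%:~R : R[i]) = num * conjc num by rewrite -hgN.
    have -> : (((gn den)%:Z)%:~R : R[i]) = den * conjc den by rewrite -hgD.
    rewrite -hprod /al cj_div; field.
    by rewrite hD0 hcD0.
  have e2 : a2 * t = - a1 * (gn den)%:Z.
    apply: (@intr_inj R[i]); rewrite !rmorphM rmorphN /=.
    have -> : (((gn den)%:Z)%:~R : R[i]) = den * conjc den by rewrite -hgD.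
    have hs := hsum; rewrite /al cj_div in hs.
    have -> : a1%:~R = - (a2%:~R * (num / den + conjc num / conjc den)) :> R[i] by rewrite hs opprK.
    rewrite ht; field.
    by rewrite hD0 hcD0.
  have h1 : (a2 %| a0 * (gn den)%:Z)%Z by rewrite -e1; apply: dvdz_mulr; apply: dvdzz.
  have h2 : (a2 %| a1 * (gn den)%:Z)%Z.
    have -> : a1 * (gn den)%:Z = a2 * (- t) by rewrite mulrN e2 mulNr opprK.
    by apply: dvdz_mulr; apply: dvdzz.
  have h3 : (a2 %| a2 * (gn den)%:Z)%Z by apply: dvdz_mulr; apply: dvdzz.
  have : (a2 %| gcdz (gcdz (a0 * (gn den)%:Z) (a1 * (gn den)%:Z)) (a2 * (gn den)%:Z))%Z.
    by rewrite !dvdz_gcd h1 h2 h3.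
  by rewrite -!mulz_gcdl /= hgcd mul1r.
split.
  by case=> _ _ _ HL; apply: (dir1 hn hD hn0 hD0 hcop hdelta ha2 HL).
move=> HP; split => //.
exact: (dir2 hn hD hn0 hD0 hcop hdelta hrel ha2 HP).
Qed.
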